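(* Let $\Omega_0$ be a distribution of a finite alphabet $\Sigma$ and $\mathsf{Obs}$ an observation function over $\Sigma$ with $\Omega_0\not\models\mathsf{Obs}$. Consider any sequence of distributions defined by: while $\mathit{CED}(\Omega_k,\mathsf{Obs})\neq\emptyset$, choose a non-empty $S_k\subseteq\mathit{CED}(\Omega_k,\mathsf{Obs})$ and for each $ce\in S_k$ a discrepancy $\delta_{ce}\in\mathcal D(ce)$, and set $\Omega_{k+1}=\Omega_k\cup\{\delta_{ce}\mid ce\in S_k\}$. Then every such sequence is finite, and its last element $\Omega'$ satisfies $\Omega'\models\mathsf{Obs}$ and $\Omega_0\prec\Omega'$. If moreover $S_k=\mathit{CED}(\Omega_k,\mathsf{Obs})$ at every step, the number of steps is at most $|\mathcal P(\Sigma)|$.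
   Context: $\sigma|_{\Sigma'}$ is the projection of a word onto $\Sigma'$; $\mathcal P(\Sigma)$ is the power set. A distribution of $\Sigma$ is a finite set of subsets of $\Sigma$ with union $\Sigma$. An observation function is a partial map $\mathsf{Obs}:\Sigma^\star\rightharpoonup\{+,-\}$ with finite domain. $\Omega\models\mathsf{Obs}$ means there exist $\mathcal L_{\Sigma_i}\subseteq\Sigma_i^\star$ ($\Sigma_i\in\Omega$) such that $\mathcal L=\{w\mid\forall\Sigma_i\in\Omega.\ w|_{\Sigma_i}\in\mathcal L_{\Sigma_i}\}$ satisfies $\sigma\in\mathcal L\iff\mathsf{Obs}(\sigma)=+$ on $\mathsf{Dom}(\mathsf{Obs})$. A counter-example to $\Omega\models\mathsf{Obs}$ is a pair $(\sigma_N,P)$ with $\mathsf{Obs}(\sigma_N)=-$ and $P:\Omega\to\mathsf{Dom}(\mathsf{Obs})$ with $\mathsf{Obs}(P(\Sigma_i))=+$ and $\sigma_N|_{\Sigma_i}=P(\Sigma_i)|_{\Sigma_i}$ for all $\Sigma_i\in\Omega$; $\mathit{CED}(\Omega,\mathsf{Obs})$ is the set of these. Discrepancies: for $\Sigma_i\in\Omega$, $\mathcal D_m^{\Sigma_i}(\sigma_N,P)$ is the set of symbols occurring a different number of times in $\sigma_N$ and $P(\Sigma_i)$; with $\theta=\Sigma\setminus\mathcal D_m^{\Sigma_i}$, $u=\sigma_N|_\theta$, $w=P(\Sigma_i)|_\theta$, $\pi$ the unique position bijection with $u[j]=w[\pi(j)]$ preserving the relative order of equal symbols, $\mathcal D_o^{\Sigma_i}(\sigma_N,P)=\{\{u[j],u[k]\}\mid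 j<k,\ \pi(j)>\pi(k)\}$. $\delta\subseteq\Sigma$ is a discrepancy iff for each $\Sigma_i\in\Omega$, $\delta\cap\mathcal D_m^{\Sigma_i}\ne\emptyset$ or $\delta$ contains an element of $\mathcal D_o^{\Sigma_i}$; $\mathcal D(ce)$ denotes the set of discrepancies of $ce$. $\Omega\preccurlyeq\Omega'$ iff each element of $\Omega$ is contained in some element of $\Omega'$; $\Omega\prec\Omega'$ iff $\Omega\preccurlyeq\Omega'$ and $\Omega'\not\preccurlyeq\Omega$. *)

(* Defs.v *)
From mathcomp Require Import all_boot.
Set Implicit Arguments. Unset Strict Implicit. Unset Printing Implicit Defensive.

Section Defs.
Variable Sigma : finType.

Definition proj (A : {set Sigma}) (w : seq Sigma) : seq Sigma :=
  [seq a <- w | a \in A].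

Definition is_distribution (Om : {set {set Sigma}}) : Prop :=
  \bigcup_(A in Om) A = [set: Sigma].

(* An observation function Sigma^* -> {+,-} (partial): Some true = +,
   Some false = -, None = undefined.  Its domain must be finite. *)
Definition obs_finite (Obs : seq Sigma -> option bool) : Prop :=
  exists dom : seq (seq Sigma), forall w, Obs w <> None -> w \in dom.

Definition models (Om : {set {set Sigma}}) (Obs : seq Sigma -> option bool) : Prop :=
  exists L : {set Sigma} -> seq Sigma -> Prop,
    (forall A w, L A w -> {subset w <= A}) /\
    (forall sigma, Obs sigma <> None ->
       ((forall A, A \in Om -> L A (proj A sigma)) <-> Obs sigma = Some true)).

(* A candidate counter-example (sigma_N, P); P is a finite function on subsets
   of Sigma, only its values on Om are meaningful (normalised to [::] outside). *)
Definition cex := (seq Sigma * {ffun {set Sigma} -> seq Sigma})%type.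

Definition CED (Om : {set {set Sigma}}) (Obs : seq Sigma -> option bool)
  (ce : cex) : Prop :=
  let: (sN, P) := ce in
  Obs sN = Some false /\
  (forall A, A \in Om -> Obs (P A) = Some true /\ proj A sN = proj A (P A)) /\
  (forall A, A \notin Om -> P A = [::]).

Definition Dm (sN w : seq Sigma) : {set Sigma} :=
  [set a | count_mem a sN != count_mem a w].

(* Tag every letter with the number of its previous occurrences; the position
   bijection pi preserving the relative order of equal letters maps the tagged
   letter at position j of u to the same tagged letter in w. *)
Definition tagseq (s : seq Sigma) : seq (Sigma * nat) :=
  [seq (x.1, count_mem x.1 (take x.2 s)) | x <- zip s (iota 0 (size s))].

Definition Do (sN w : seq Sigma) (d : {set Sigma}) : Prop :=
  let theta := ~: Dm sN w in
  let tu := tagseq (proj theta sN) in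
  let tw := tagseq (proj theta w) in
  exists x y, x \in tu /\ y \in tu /\
    index x tu < index y tu /\ index y tw < index x tw /\
    d = [set x.1; y.1].

Definition discrepancy (Om : {set {set Sigma}}) (ce : cex) (delta : {set Sigma}) : Prop :=
  let: (sN, P) := ce in
  forall A, A \in Om ->
    (delta :&: Dm sN (P A) != set0) \/ (exists d, Do sN (P A) d /\ d \subset delta).

Definition refines (Om Om' : {set {set Sigma}}) : Prop :=
  forall A, A \in Om -> exists2 B, B \in Om' & A \subset B.
Definition strict_refines (Om Om' : {set {set Sigma}}) : Prop :=
  refines Om Om' /\ ~ refines Om' Om.

Definition stepS (Obs : seq Sigma -> option bool) (Om : {set {set Sigma}})
  (S : cex -> Prop) (Om' : {set {set Sigma}}) : Prop :=
  exists delta : cex -> {set Sigma},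
    (forall ce, S ce -> discrepancy Om ce (delta ce)) /\
    (forall A, A \in Om' <-> (A \in Om \/ exists ce, S ce /\ delta ce = A)).

Definition step (Obs : seq Sigma -> option bool) (Om Om' : {set {set Sigma}}) : Prop :=
  exists S : cex -> Prop,
    (exists ce, S ce) /\ (forall ce, S ce -> CED Om Obs ce) /\ stepS Obs Om S Om'.

Definition full_step (Obs : seq Sigma -> option bool) (Om Om' : {set {set Sigma}}) : Prop :=
  (exists ce, CED Om Obs ce) /\ stepS Obs Om (CED Om Obs) Om'.

End Defs.

(* Main.v *)
Require Import Defs.
From mathcomp Require Import all_boot.

Section Helpers.
Variable Sigma : finType.

Lemma tagseq_rcons (s : seq Sigma) a :
  tagseq (rcons s a) = rcons (tagseq s) (a, count_mem a s).
Proof.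
rewrite /tagseq size_rcons -addn1 iotaD add0n /= cats1 zip_rcons ?size_iota //.
rewrite map_rcons /=; congr rcons; last by rewrite -cats1 take_size_cat.
apply/eq_in_map => -[b i] /= Hz.
have : i \in unzip2 (zip s (iota 0 (size s))) by exact: (map_f snd Hz).
rewrite unzip2_zip ?size_iota // mem_iota add0n => /andP[_ Hi].
by rewrite -cats1 takel_cat // ltnW.
Qed.

Lemma tagseq_filter (p : pred Sigma) s :
  tagseq (filter p s) = filter (fun x => p x.1) (tagseq s).
Proof.
elim/last_ind: s => [|s a IH] //.
rewrite filter_rcons !tagseq_rcons filter_rcons /=.
case pa: (p a) => //; rewrite tagseq_rcons IH; congr rcons; congr pair.
rewrite count_filter; apply: eq_count => z /=.
by case: eqP => // ->; rewrite pa.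
Qed.

Lemma mem_tagseq x (s : seq Sigma) : x \in tagseq s -> x.1 \in s.
Proof.
elim/last_ind: s => [|s a IH] //.
rewrite tagseq_rcons mem_rcons in_cons mem_rcons in_cons.
case/orP => [/eqP -> /=|/IH ->]; first by rewrite eqxx.
by rewrite orbT.
Qed.

Lemma index_filter (T : eqType) (q : pred T) x y (l : seq T) :
  q x -> q y ->
  (index x (filter q l) < index y (filter q l)) = (index x l < index y l).
Proof.
move=> qx qy; elim: l => [|z l IH] //=.
case qz: (q z) => /=.
  case: (z == x); case: (z == y) => //.
have zx : (z == x) = false by apply/eqP => E; rewrite E qx in qz.
have zy : (z == y) = false by apply/eqP => E; rewrite E qy in qz.
by rewrite zx zy ltnS.
Qed.

Lemma proj_proj (C B : {set Sigma}) s :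
  C \subset B -> proj C (proj B s) = proj C s.
Proof.
move=> CB; rewrite /proj -filter_predI; apply: eq_filter => z /=.
by case zC: (z \in C) => //=; rewrite (subsetP CB).
Qed.

Lemma count_proj (A : {set Sigma}) s a :
  a \in A -> count_mem a (proj A s) = count_mem a s.
Proof.
move=> aA; rewrite /proj count_filter; apply: eq_count => z /=.
by case: eqP => // ->; rewrite aA.
Qed.

Lemma no_sub (sN w : seq Sigma) (A delta : {set Sigma}) :
  proj A sN = proj A w ->
  ((delta :&: Dm sN w != set0) \/ (exists d, Do sN w d /\ d \subset delta)) ->
  ~ delta \subset A.
Proof.
move=> Hp [Hd|[d [Hdo Hsub]]] HdA.
  case/set0Pn: Hd => a; rewrite !inE => /andP[aD].
  have aA := subsetP HdA _ aD; rewrite -(count_proj A sN a aA) -(count_proj A w a aA).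
  by rewrite Hp eqxx.
move: Hdo; rewrite /Do.
set theta := ~: Dm sN w.
move=> [x [y [xu [yu [Hxy [Hyx Hd]]]]]].
set C := (delta :&: theta).
have pC : proj C (proj theta sN) = proj C (proj theta w).
  rewrite !proj_proj ?subsetIr //.
  rewrite -(@proj_proj C A sN); last by apply: subset_trans HdA; exact: subsetIl.
  rewrite Hp proj_proj //; apply: subset_trans HdA; exact: subsetIl.
have Cx : x.1 \in C.
  apply/setIP; split; first by apply: (subsetP Hsub); rewrite Hd !inE eqxx.
  by move/mem_tagseq: xu; rewrite /proj mem_filter => /andP[].
have Cy : y.1 \in C.
  apply/setIP; split; first by apply: (subsetP Hsub); rewrite Hd !inE eqxx orbT.
  by move/mem_tagseq: yu; rewrite /proj mem_filter => /andP[].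
have E : filter (fun z => z.1 \in C) (tagseq (proj theta sN)) =
          filter (fun z => z.1 \in C) (tagseq (proj theta w)).
  by rewrite -!tagseq_filter; exact: (congr1 (@tagseq Sigma) pC).
have := @index_filter _ (fun z => z.1 \in C) x y (tagseq (proj theta sN)) Cx Cy.
rewrite Hxy E index_filter //.
by rewrite ltnNge (ltnW Hyx).
Qed.

Lemma disc_notin Obs Om (ce : cex Sigma) delta A :
  CED Om Obs ce -> discrepancy Om ce delta -> A \in Om -> ~ delta \subset A.
Proof.
case: ce => sN P [_ [HP _]] Hd HA.
have [_ Hp] := HP A HA.
exact: (@no_sub _ _ _ _ Hp (Hd A HA)).
Qed.

Lemma stepS_grow Obs Om (S : cex Sigma -> Prop) Om' ce :
  S ce -> CED Om Obs ce -> stepS Obs Om S Om' ->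
  [/\ Om \subset Om', (exists2 d, d \in Om' & (forall A, A \in Om -> ~ d \subset A))
    & Om \proper Om'].
Proof.
move=> Sce Cce [delta [Hdisc Hiff]].
have sub : Om \subset Om' by apply/subsetP => A HA; apply/Hiff; left.
have dO' : delta ce \in Om' by apply/Hiff; right; exists ce.
have nd : forall A, A \in Om -> ~ delta ce \subset A.
  by move=> A; apply: (@disc_notin _ _ _ _ A Cce (Hdisc _ Sce)).
split => //; first by exists (delta ce).
apply/properP; split => //; exists (delta ce) => //.
by apply/negP => H; apply: (nd _ H); exact: subxx.
Qed.

Lemma step_grow (Obs : seq Sigma -> option bool) (Om Om' : {set {set Sigma}}) : step Obs Om Om' ->
  [/\ Om \subset Om', (exists2 d, d \in Om' & (forall A, A \in Om -> ~ d \subset A))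
    & Om \proper Om'].
Proof.
move=> [S [[ce Sce] [HS Hst]]]; exact: (@stepS_grow _ _ _ _ _ Sce (HS _ Sce) Hst).
Qed.

Lemma full_step_grow (Obs : seq Sigma -> option bool) (Om Om' : {set {set Sigma}}) : full_step Obs Om Om' -> Om \proper Om'.
Proof.
move=> [[ce Cce] Hst]; by have [] := @stepS_grow _ _ _ _ _ Cce Cce Hst.
Qed.

Lemma models_of_noCED (Om : {set {set Sigma}}) (Obs : seq Sigma -> option bool) : obs_finite Obs ->
  ~ (exists ce, CED Om Obs ce) -> models Om Obs.
Proof.
move=> [dom Hdom] Hno.
exists (fun A w => exists s, Obs s = Some true /\ w = proj A s); split.
  move=> A w [s [_ ->]] z; by rewrite /proj mem_filter => /andP[].
move=> sigma Hs; split; last first.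
  by move=> Ht A _; exists sigma.
move=> Hall; case Es: (Obs sigma) Hs => [[]|] Hs //.
exfalso; apply: Hno.
pose good A w := (Obs w == Some true) && (proj A w == proj A sigma).
pose P := [ffun A => if A \in Om then nth [::] dom (find (good A) dom) else [::]].
exists (sigma, P); split => //; split; last first.
  by move=> A HA; rewrite ffunE (negbTE HA).
move=> A HA; rewrite ffunE HA.
have hasg : has (good A) dom.
  have [s [Hs1 Hs2]] := Hall A HA.
  apply/hasP; exists s; first by apply: Hdom; rewrite Hs1.
  by rewrite /good Hs1 -Hs2 !eqxx.
have := nth_find [::] hasg; rewrite /good => /andP[/eqP -> /eqP ->]; split => //.
Qed.

End Helpers.
Arguments step_grow {Sigma Obs Om Om'}.
Arguments full_step_grow {Sigma Obs Om Om'}.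
Arguments models_of_noCED {Sigma Om Obs}.

Theorem mainTheorem12 (Sigma : finType) (Om0 : {set {set Sigma}})
  (Obs : seq Sigma -> option bool) :
  is_distribution Om0 -> obs_finite Obs -> ~ models Om0 Obs ->
  [/\ ~ (exists f : nat -> {set {set Sigma}},
           f 0 = Om0 /\ forall k, step Obs (f k) (f k.+1)),
      (forall (n : nat) (f : nat -> {set {set Sigma}}),
         f 0 = Om0 -> (forall k, k < n -> step Obs (f k) (f k.+1)) ->
         ~ (exists ce, CED (f n) Obs ce) ->
         models (f n) Obs /\ strict_refines Om0 (f n))
    & (forall (n : nat) (f : nat -> {set {set Sigma}}),
         f 0 = Om0 -> (forall k, k < n -> full_step Obs (f k) (f k.+1)) ->
         n <= #|powerset [set: Sigma]|)].
Proof.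
move=> _ Hfin Hnm; split.
- move=> [f [f0 Hf]].
  have Hc : forall k, k <= #|f k|.
    elim=> [|k IH] //; apply: leq_ltn_trans IH _.
    by have [_ _ /proper_card] := step_grow (Hf k).
  have := Hc #|{set Sigma}|.+1.
  by rewrite ltnNge max_card.
- move=> n f f0 Hf Hno.
  have Hm := models_of_noCED Hfin Hno; split => //.
  have Hsub : forall k, k <= n -> Om0 \subset f k.
    elim=> [|k IH] Hk; first by rewrite f0.
    apply: subset_trans (IH (ltnW Hk)) _.
    by have [] := step_grow (Hf k Hk).
  case: n Hf Hno Hm Hsub => [|n] Hf Hno Hm Hsub.
    by exfalso; apply: Hnm; rewrite -f0.
  split.
    move=> A HA; exists A => //; exact: (subsetP (Hsub _ (leqnn _))).
  have [_ [d dIn dN] _] := step_grow (Hf 0 isT).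
  rewrite f0 in dN.
  have dn : d \in f n.+1.
    elim: n {Hno Hm} Hf Hsub => [|m IHm] Hf Hsub; first by [].
    have [s1 _ _] := step_grow (Hf m.+1 (leqnn _)).
    apply: (subsetP s1); apply: IHm.
      by move=> k Hk; apply: Hf; apply: ltn_trans Hk _.
    by move=> k Hk; apply: Hsub; apply: leq_trans Hk _.
  move=> Href; have [B HB dB] := Href d dn.
  exact: dN HB dB.
- move=> n f f0 Hf.
  have Hc : forall k, k <= n -> k <= #|f k|.
    elim=> [|k IH] Hk //; apply: leq_ltn_trans (IH (ltnW Hk)) _.
    exact: proper_card (full_step_grow (Hf k Hk)).
  apply: leq_trans (Hc n (leqnn _)) _.
  apply: subset_leq_card; apply/subsetP => A _.
  by rewrite powersetE subsetT.
Qed.
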